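(* Let $A_1,A_2,A_3,A_4\in\mathbb{R}^3$ be four non-coplanar points such that for every $i\in\{1,2,3,4\}$, $\big\|\sum_{j\neq i}\vec u(A_j,A_i)\big\|>1$, and let $A_0$ be the Fermat–Torricelli point of $A_1A_2A_3A_4$ (so $A_0$ is not a vertex and $\sum_{i=1}^4\vec u(A_0,A_i)=\vec 0$). For $i\neq j$ let $\vec\delta_{i0j}=\vec u(A_0,A_i)+\vec u(A_0,A_j)$, a direction vector of the bisector of the angle $\angle A_iA_0A_j$. Then: (1) the bisectors of each pair of angles subtended at $A_0$ by opposite edges lie on a common line through $A_0$, namely $$\frac{\vec\delta_{102}}{\|\vec\delta_{102}\|}\cdot\frac{\vec\delta_{304}}{\|\vec\delta_{304}\|}=\frac{\vec\delta_{203}}{\|\vec\delta_{203}\|}\cdot\frac{\vec\delta_{104}}{\|\vec\delta_{104}\|}=\frac{\vec\delta_{103}}{\|\vec\delta_{103}\|}\cdot\frac{\vec\delta_{204}}{\|\vec\delta_{204}\|}=-1;$$ (2) these three lines (with directions $\vec\delta_{102},\vec\delta_{103},\vec\delta_{104}$) are pairwise perpendicular at $A_0$: $$\vec\delta_{102}\cdot\vec\delta_{103}=\vec\delta_{102}\cdot\vec\delta_{104}=\vec\delta_{103}\cdot\vec\delta_{104}=0.$$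
   Context: For distinct points $P,Q\in\mathbb{R}^3$, $\vec u(P,Q)=\frac{Q-P}{\|Q-P\|}$ denotes the unit vector from $P$ to $Q$. The Fermat–Torricelli point of the tetrahedron is the minimizer over $A_0\in\mathbb{R}^3$ of $\sum_{i=1}^4\|A_0-A_i\|$; under the stated condition it is not a vertex and satisfies $\sum_{i=1}^4\vec u(A_0,A_i)=\vec 0$. The opposite edge pairs of the tetrahedron are $\{A_1A_2,A_3A_4\}$, $\{A_2A_3,A_1A_4\}$, $\{A_1A_3,A_2A_4\}$, and the corresponding angles at $A_0$ are $\angle A_iA_0A_j$. *)

(* Defs.v *)
From HB Require Import structures.
From mathcomp Require Import all_boot all_order all_algebra.
From mathcomp Require Import reals.
Set Implicit Arguments. Unset Strict Implicit. Unset Printing Implicit Defensive.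
Import Order.TTheory GRing.Theory Num.Theory.
Local Open Scope ring_scope.

Definition dot {R : realType} (u v : 'rV[R]_3) : R := \sum_(k < 3) u 0 k * v 0 k.

Definition enorm {R : realType} (u : 'rV[R]_3) : R := Num.sqrt (dot u u).

Definition uvec {R : realType} (P Q : 'rV[R]_3) : 'rV[R]_3 :=
  (enorm (Q - P))^-1 *: (Q - P).

Definition noncoplanar {R : realType} (A1 A2 A3 A4 : 'rV[R]_3) : Prop :=
  \det (\matrix_(i < 3, j < 3)
          (if i == 0 :> nat then (A2 - A1) 0 j
           else if i == 1 :> nat then (A3 - A1) 0 j
           else (A4 - A1) 0 j)) != 0.

Definition fermat_torricelli {R : realType} (A1 A2 A3 A4 A0 : 'rV[R]_3) : Prop :=
  forall X : 'rV[R]_3,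
    enorm (A0 - A1) + enorm (A0 - A2) + enorm (A0 - A3) + enorm (A0 - A4)
    <= enorm (X - A1) + enorm (X - A2) + enorm (X - A3) + enorm (X - A4).

Definition delta {R : realType} (A0 Ai Aj : 'rV[R]_3) : 'rV[R]_3 :=
  uvec A0 Ai + uvec A0 Aj.

Definition normalize {R : realType} (v : 'rV[R]_3) : 'rV[R]_3 := (enorm v)^-1 *: v.

(* Main.v *)
Require Import Defs.
From HB Require Import structures.
From mathcomp Require Import all_boot all_order all_algebra.
From mathcomp Require Import reals.
From mathcomp Require Import ring lra.
Import Order.TTheory GRing.Theory Num.Theory.
Local Open Scope ring_scope.

Section S.
Context {R : realType}.
Implicit Types A P Q u v w : 'rV[R]_3.

Definition c3 (x0 x1 x2 : R) : 'rV[R]_3 :=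
  \row_(k < 3) (if k == 0 :> nat then x0 else if k == 1 :> nat then x1 else x2).

Lemma rowE3 A : A = c3 (A 0 0) (A 0 1) (A 0 2).
Proof.
apply/rowP => k; rewrite !mxE; case: k => [[|[|[|k]]] Hk] //=;
  congr (A _ _); apply: val_inj => //.
Qed.

Lemma dotE u v : dot u v = u 0 0 * v 0 0 + u 0 1 * v 0 1 + u 0 2 * v 0 2.
Proof. by rewrite [u]rowE3 [v]rowE3 /dot !big_ord_recl big_ord0 !mxE /= addr0 addrA. Qed.

Lemma dot_ge0 u : 0 <= dot u u.
Proof. rewrite dotE; nra. Qed.

Lemma enorm_sq u : enorm u ^+ 2 = dot u u.
Proof. by rewrite /enorm sqr_sqrtr // dot_ge0. Qed.

Lemma enorm_ge0 u : 0 <= enorm u.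
Proof. exact: sqrtr_ge0. Qed.

Lemma dot0 u : dot u u = 0 -> u = 0.
Proof.
rewrite dotE => h.
have h0 : u 0 0 = 0 by apply/eqP; rewrite -sqrf_eq0; apply/eqP; nra.
have h1 : u 0 1 = 0 by apply/eqP; rewrite -sqrf_eq0; apply/eqP; nra.
have h2 : u 0 2 = 0 by apply/eqP; rewrite -sqrf_eq0; apply/eqP; nra.
rewrite [u]rowE3 h0 h1 h2; apply/rowP => k; rewrite !mxE.
by case: ifP => _ //; case: ifP.
Qed.

Lemma enorm0 : enorm (0 : 'rV[R]_3) = 0.
Proof. by rewrite /enorm dotE !mxE mulr0 !addr0 sqrtr0. Qed.

Lemma neq_pos A B : A <> B -> 0 < enorm (A - B).
Proof.
move=> nAB; rewrite lt_neqAle enorm_ge0 andbT; apply/eqP => h.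
apply: nAB; apply/eqP; rewrite -subr_eq0; apply/eqP; apply: dot0.
by rewrite -enorm_sq -h expr0n.
Qed.

Arguments neq_pos {A B}.

Lemma enorm_sym A B : enorm (A - B) = enorm (B - A).
Proof. by rewrite /enorm !dotE !mxE; congr Num.sqrt; ring. Qed.

Lemma enormNv u : enorm (- u) = enorm u.
Proof. by rewrite /enorm !dotE !mxE; congr Num.sqrt; ring. Qed.

Lemma enormZ t v : 0 <= t -> enorm (t *: v) = t * enorm v.
Proof.
move=> ht; rewrite /enorm (_ : dot (t *: v) (t *: v) = t ^+ 2 * dot v v).
  by rewrite sqrtrM ?sqr_ge0 // sqrtr_sqr ger0_norm.
by rewrite !dotE !mxE; ring.
Qed.

Lemma uvecN P Q : uvec P Q = - uvec Q P.
Proof. by rewrite /uvec enorm_sym -scalerN opprB. Qed.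

Lemma uvec_unit P Q : P <> Q -> dot (uvec P Q) (uvec P Q) = 1.
Proof.
move=> nPQ; have hp := neq_pos (nesym nPQ).
have e := enorm_sq (Q - P).
rewrite /uvec (_ : dot _ _ = (enorm (Q - P) ^+ 2)^-1 * dot (Q - P) (Q - P)).
  by rewrite -e mulVf // expf_neq0 // gt_eqF.
by rewrite !dotE !mxE; field; rewrite gt_eqF.
Qed.

Lemma uvec_coord P Q : P <> Q -> forall k, Q 0 k = P 0 k + enorm (Q - P) * uvec P Q 0 k.
Proof.
move=> nPQ k; have hp := neq_pos (nesym nPQ).
rewrite /uvec !mxE; field; by rewrite gt_eqF.
Qed.

Lemma bound P Q v t : P <> Q ->
  enorm (P + t *: v - Q) <= enorm (P - Q) + t * dot (uvec Q P) v
     + t ^+ 2 * (dot v v / (2 * enorm (P - Q))).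
Proof.
move=> nPQ; have ha := neq_pos nPQ.
have hs : enorm (P + t *: v - Q) ^+ 2 =
   enorm (P - Q) ^+ 2 + 2 * t * dot (P - Q) v + t ^+ 2 * dot v v.
  by rewrite !enorm_sq !dotE !mxE; ring.
have hd : dot (uvec Q P) v = (enorm (P - Q))^-1 * dot (P - Q) v.
  by rewrite /uvec !dotE !mxE; ring.
rewrite hd.
move: hs ha; set s := enorm (P + t *: v - Q); set a := enorm (P - Q).
set d := dot (P - Q) v; set e := dot v v => hs ha.
have E2 : (a - s) ^+ 2 = 2 * a ^+ 2 + 2 * t * d + t ^+ 2 * e - 2 * a * s.
  rewrite (_ : (a - s) ^+ 2 = a ^+ 2 - 2 * a * s + s ^+ 2); last by ring.
  rewrite hs; ring.
rewrite -subr_ge0.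
have -> : a + t * (a^-1 * d) + t ^+ 2 * (e / (2 * a)) - s = (a - s) ^+ 2 / (2 * a).
  by rewrite E2; field; rewrite gt_eqF.
by apply: divr_ge0; [exact: sqr_ge0 | lra].
Qed.

Lemma core (k C : R) : 0 <= C -> (forall t, 0 < t -> 0 <= - (t * k) + t ^+ 2 * C) -> k <= 0.
Proof.
move=> hC H; case: (lerP k 0) => // hk.
have hC1 : 0 < C + 1 by lra.
set t := k / (C + 1).
have ht : 0 < t by apply: divr_gt0.
have e : t * C = k - t by rewrite /t; field; rewrite gt_eqF.
have := H t ht.
have -> : - (t * k) + t ^+ 2 * C = - (t * t) by rewrite expr2 -mulrA e; ring.
nra.
Qed.

Definition D3 (a0 a1 a2 b0 b1 b2 c0 c1 c2 : R) :=
  a0 * (b1 * c2 - b2 * c1) - a1 * (b0 * c2 - b2 * c0) + a2 * (b0 * c1 - b1 * c0).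

Lemma nc_D A1 A2 A3 A4 : noncoplanar A1 A2 A3 A4 ->
  D3 (A2 0 0 - A1 0 0) (A2 0 1 - A1 0 1) (A2 0 2 - A1 0 2)
     (A3 0 0 - A1 0 0) (A3 0 1 - A1 0 1) (A3 0 2 - A1 0 2)
     (A4 0 0 - A1 0 0) (A4 0 1 - A1 0 1) (A4 0 2 - A1 0 2) != 0.
Proof.
rewrite /noncoplanar.
rewrite [A1]rowE3 [A2]rowE3 [A3]rowE3 [A4]rowE3.
rewrite (expand_det_row _ ord0) !big_ord_recl big_ord0 /cofactor.
rewrite !(expand_det_row _ ord0) !big_ord_recl !big_ord0 /cofactor.
rewrite !det_mx11 !mxE /= /bump /=.
move=> H; apply/eqP => H'; move/eqP: H; apply.
rewrite -[X in _ = X]H' /D3; ring.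
Qed.

Lemma copl A0 A1 A2 A3 A4 (p q : 'rV[R]_3) (c1 c2 c3 c4 d1 d2 d3 d4 : R) :
  (forall k, A1 0 k = A0 0 k + c1 * p 0 k + d1 * q 0 k) ->
  (forall k, A2 0 k = A0 0 k + c2 * p 0 k + d2 * q 0 k) ->
  (forall k, A3 0 k = A0 0 k + c3 * p 0 k + d3 * q 0 k) ->
  (forall k, A4 0 k = A0 0 k + c4 * p 0 k + d4 * q 0 k) ->
  ~ noncoplanar A1 A2 A3 A4.
Proof.
move=> e1 e2 e3 e4 /nc_D/eqP; apply.
rewrite !e1 !e2 !e3 !e4 /D3; ring.
Qed.

Lemma normN (x y : 'rV[R]_3) : (forall k, y 0 k = - x 0 k) -> dot x x != 0 ->
  dot (normalize x) (normalize y) = -1.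
Proof.
move=> hy hx.
have ey : enorm y = enorm x by rewrite /enorm !dotE !hy; congr Num.sqrt; ring.
have nz : enorm x != 0.
  by apply: contra hx => /eqP h; rewrite -enorm_sq h expr0n.
rewrite /normalize ey.
transitivity (- dot x x / enorm x ^+ 2).
  by rewrite !dotE !mxE !hy; field.
by rewrite enorm_sq; field.
Qed.

Lemma orth u1 u2 u3 u4 : dot u1 u1 = 1 -> dot u2 u2 = 1 -> dot u3 u3 = 1 ->
  dot u4 u4 = 1 -> (forall k, u1 0 k + u2 0 k + u3 0 k + u4 0 k = 0) ->
  dot (u1 + u2) (u1 + u3) = 0.
Proof.
move=> h1 h2 h3 h4 hs.
have e k : u4 0 k = - (u1 0 k + u2 0 k + u3 0 k) by have := hs k; lra.
move: h1 h2 h3 h4; rewrite !dotE !mxE !e => h1 h2 h3 h4.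
lra.
Qed.

Lemma vertex P Q1 Q2 Q3 : P <> Q1 -> P <> Q2 -> P <> Q3 ->
  (forall X, enorm (P - P) + enorm (P - Q1) + enorm (P - Q2) + enorm (P - Q3)
     <= enorm (X - P) + enorm (X - Q1) + enorm (X - Q2) + enorm (X - Q3)) ->
  enorm (uvec Q1 P + uvec Q2 P + uvec Q3 P) <= 1.
Proof.
move=> n1 n2 n3 H.
set T := uvec Q1 P + uvec Q2 P + uvec Q3 P.
set e := enorm T.
have he : 0 <= e by apply: enorm_ge0.
set v := - T.
have r1 := neq_pos n1; have r2 := neq_pos n2; have r3 := neq_pos n3.
pose C := dot v v / (2 * enorm (P - Q1)) + dot v v / (2 * enorm (P - Q2))
        + dot v v / (2 * enorm (P - Q3)).
have hC : 0 <= C.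
  by rewrite /C; have := dot_ge0 v; move=> hv;
     rewrite !addr_ge0 // divr_ge0 // mulr_ge0 // ltW.
have : e ^+ 2 - e <= 0.
  apply: (core _ _ hC) => t ht.
  have := H (P + t *: v).
  rewrite (_ : P + t *: v - P = t *: v); last by rewrite addrC addKr.
  have ev : enorm v = e by rewrite /v enormNv.
  rewrite subrr enorm0 (enormZ t v (ltW ht)) ev.
  have b1 := bound P Q1 v t n1; have b2 := bound P Q2 v t n2; have b3 := bound P Q3 v t n3.
  have lin : dot (uvec Q1 P) v + dot (uvec Q2 P) v + dot (uvec Q3 P) v = - e ^+ 2.
    by rewrite /e enorm_sq /v /T !dotE !mxE; ring.
  have lin' : t * dot (uvec Q1 P) v + t * dot (uvec Q2 P) v + t * dot (uvec Q3 P) v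
     = - (t * e ^+ 2) by rewrite -!mulrDr lin mulrN.
  have eC : t ^+ 2 * C = t ^+ 2 * (dot v v / (2 * enorm (P - Q1)))
     + t ^+ 2 * (dot v v / (2 * enorm (P - Q2))) + t ^+ 2 * (dot v v / (2 * enorm (P - Q3))).
    by rewrite /C !mulrDr.
  move: b1 b2 b3 lin' eC.
  set x1 := t ^+ 2 * (dot v v / (2 * enorm (P - Q1))).
  set x2 := t ^+ 2 * (dot v v / (2 * enorm (P - Q2))).
  set x3 := t ^+ 2 * (dot v v / (2 * enorm (P - Q3))).
  set y1 := t * dot (uvec Q1 P) v.
  set y2 := t * dot (uvec Q2 P) v.
  set y3 := t * dot (uvec Q3 P) v.
  set z := t ^+ 2 * C.
  move=> b1 b2 b3 lin' eC hH.
  have -> : - (t * (e ^+ 2 - e)) + z = t * e - t * e ^+ 2 + z by ring.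
  lra.
move=> h; nra.
Qed.

Lemma interior P Q1 Q2 Q3 Q4 : P <> Q1 -> P <> Q2 -> P <> Q3 -> P <> Q4 ->
  (forall X, enorm (P - Q1) + enorm (P - Q2) + enorm (P - Q3) + enorm (P - Q4)
     <= enorm (X - Q1) + enorm (X - Q2) + enorm (X - Q3) + enorm (X - Q4)) ->
  uvec Q1 P + uvec Q2 P + uvec Q3 P + uvec Q4 P = 0.
Proof.
move=> n1 n2 n3 n4 H.
set T := uvec Q1 P + uvec Q2 P + uvec Q3 P + uvec Q4 P.
set v := - T.
have r1 := neq_pos n1; have r2 := neq_pos n2; have r3 := neq_pos n3; have r4 := neq_pos n4.
pose C := dot v v / (2 * enorm (P - Q1)) + dot v v / (2 * enorm (P - Q2))
        + dot v v / (2 * enorm (P - Q3)) + dot v v / (2 * enorm (P - Q4)).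
have hC : 0 <= C.
  by rewrite /C; have := dot_ge0 v; move=> hv;
     rewrite !addr_ge0 // divr_ge0 // mulr_ge0 // ltW.
apply: dot0; apply/eqP; rewrite eq_le dot_ge0 andbT.
apply: (core _ _ hC) => t ht.
have := H (P + t *: v).
have b1 := bound P Q1 v t n1; have b2 := bound P Q2 v t n2; have b3 := bound P Q3 v t n3;
have b4 := bound P Q4 v t n4.
have lin : dot (uvec Q1 P) v + dot (uvec Q2 P) v + dot (uvec Q3 P) v
    + dot (uvec Q4 P) v = - dot T T.
  by rewrite /v /T !dotE !mxE; ring.
have lin' : t * dot (uvec Q1 P) v + t * dot (uvec Q2 P) v + t * dot (uvec Q3 P) v
   + t * dot (uvec Q4 P) v = - (t * dot T T) by rewrite -!mulrDr lin mulrN.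
have eC : t ^+ 2 * C = t ^+ 2 * (dot v v / (2 * enorm (P - Q1)))
   + t ^+ 2 * (dot v v / (2 * enorm (P - Q2))) + t ^+ 2 * (dot v v / (2 * enorm (P - Q3)))
   + t ^+ 2 * (dot v v / (2 * enorm (P - Q4))).
  by rewrite /C !mulrDr.
move: b1 b2 b3 b4 lin' eC.
set x1 := t ^+ 2 * (dot v v / (2 * enorm (P - Q1))).
set x2 := t ^+ 2 * (dot v v / (2 * enorm (P - Q2))).
set x3 := t ^+ 2 * (dot v v / (2 * enorm (P - Q3))).
set x4 := t ^+ 2 * (dot v v / (2 * enorm (P - Q4))).
set y1 := t * dot (uvec Q1 P) v.
set y2 := t * dot (uvec Q2 P) v.
set y3 := t * dot (uvec Q3 P) v.
set y4 := t * dot (uvec Q4 P) v.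
set z := t ^+ 2 * C.
move=> b1 b2 b3 b4 lin' eC hH.
lra.
Qed.

End S.
Arguments interior {R P Q1 Q2 Q3 Q4}.
Arguments uvec_unit {R P Q}.
Arguments uvec_coord {R P Q}.
Arguments orth {R u1 u2 u3 u4}.


Lemma addE (R : realType) (u v : 'rV[R]_3) k : (u + v) 0 k = u 0 k + v 0 k.
Proof. by rewrite mxE. Qed.
Lemma zeroE (R : realType) k : (0 : 'rV[R]_3) 0 k = 0.
Proof. by rewrite mxE. Qed.

Theorem mainTheorem2 (R : realType) (A1 A2 A3 A4 A0 : 'rV[R]_3) :
  noncoplanar A1 A2 A3 A4 ->
  1 < enorm (uvec A2 A1 + uvec A3 A1 + uvec A4 A1) ->
  1 < enorm (uvec A1 A2 + uvec A3 A2 + uvec A4 A2) ->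
  1 < enorm (uvec A1 A3 + uvec A2 A3 + uvec A4 A3) ->
  1 < enorm (uvec A1 A4 + uvec A2 A4 + uvec A3 A4) ->
  fermat_torricelli A1 A2 A3 A4 A0 ->
  (dot (normalize (delta A0 A1 A2)) (normalize (delta A0 A3 A4)) = -1 /\
   dot (normalize (delta A0 A2 A3)) (normalize (delta A0 A1 A4)) = -1 /\
   dot (normalize (delta A0 A1 A3)) (normalize (delta A0 A2 A4)) = -1) /\
  (dot (delta A0 A1 A2) (delta A0 A1 A3) = 0 /\
   dot (delta A0 A1 A2) (delta A0 A1 A4) = 0 /\
   dot (delta A0 A1 A3) (delta A0 A1 A4) = 0).
Proof.
move=> nc h1 h2 h3 h4 ft.
have d12 : A1 <> A2 by move=> E; subst; move/nc_D/eqP: nc; apply; rewrite /D3; ring.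
have d13 : A1 <> A3 by move=> E; subst; move/nc_D/eqP: nc; apply; rewrite /D3; ring.
have d14 : A1 <> A4 by move=> E; subst; move/nc_D/eqP: nc; apply; rewrite /D3; ring.
have d23 : A2 <> A3 by move=> E; subst; move/nc_D/eqP: nc; apply; rewrite /D3; ring.
have d24 : A2 <> A4 by move=> E; subst; move/nc_D/eqP: nc; apply; rewrite /D3; ring.
have d34 : A3 <> A4 by move=> E; subst; move/nc_D/eqP: nc; apply; rewrite /D3; ring.
have n1 : A0 <> A1.
  move=> E; subst A0.
  have : enorm (uvec A2 A1 + uvec A3 A1 + uvec A4 A1) <= 1.
    by apply: (vertex _ _ _ _ d12 d13 d14) => X; have := ft X; lra.
  lra.
have n2 : A0 <> A2.
  move=> E; subst A0.
  have : enorm (uvec A1 A2 + uvec A3 A2 + uvec A4 A2) <= 1.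
    by apply: (vertex _ _ _ _ (nesym d12) d23 d24) => X; have := ft X; lra.
  lra.
have n3 : A0 <> A3.
  move=> E; subst A0.
  have : enorm (uvec A1 A3 + uvec A2 A3 + uvec A4 A3) <= 1.
    by apply: (vertex _ _ _ _ (nesym d13) (nesym d23) d34) => X; have := ft X; lra.
  lra.
have n4 : A0 <> A4.
  move=> E; subst A0.
  have : enorm (uvec A1 A4 + uvec A2 A4 + uvec A3 A4) <= 1.
    by apply: (vertex _ _ _ _ (nesym d14) (nesym d24) (nesym d34)) => X; have := ft X; lra.
  lra.
have S0 := interior n1 n2 n3 n4 ft.
have hs k : uvec A0 A1 0 k + uvec A0 A2 0 k + uvec A0 A3 0 k + uvec A0 A4 0 k = 0.
  have := congr1 (fun M : 'rV[R]_3 => M 0 k) S0; rewrite !(uvecN A0) !mxE => h; lra.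
have u1 := uvec_unit n1; have u2 := uvec_unit n2.
have u3 := uvec_unit n3; have u4 := uvec_unit n4.
have c1 := uvec_coord n1; have c2 := uvec_coord n2.
have c3 := uvec_coord n3; have c4 := uvec_coord n4.
move: hs u1 u2 u3 u4 c1 c2 c3 c4.
set v1 := uvec A0 A1; set v2 := uvec A0 A2; set v3 := uvec A0 A3; set v4 := uvec A0 A4.
set r1 := enorm (A1 - A0); set r2 := enorm (A2 - A0); set r3 := enorm (A3 - A0);
set r4 := enorm (A4 - A0).
move=> hs u1 u2 u3 u4 c1 c2 c3 c4.
rewrite /delta -/v1 -/v2 -/v3 -/v4.
split; last first.
  split; first exact: (orth u1 u2 u3 u4 hs).
  split.
    by apply: (orth u1 u2 u4 u3) => k; have := hs k; lra.
  rewrite (_ : dot (v1 + v3) (v1 + v4) = dot (v1 + v4) (v1 + v3)); last first.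
    by rewrite !dotE !mxE; ring.
  by apply: (orth u1 u4 u3 u2) => k; have := hs k; lra.
split.
  apply: normN; first by move=> k; rewrite !addE; have := hs k; lra.
  apply/eqP => /dot0 Z.
  have z k : v1 0 k + v2 0 k = 0 by have := congr1 (fun M : 'rV[R]_3 => M 0 k) Z; rewrite addE zeroE.
  apply: (@copl R A0 A1 A2 A3 A4 v1 v3 r1 (- r2) 0 0 0 0 r3 (- r4) _ _ _ _ nc) => k.
  - by rewrite c1; ring.
  - by rewrite c2 (_ : v2 0 k = - v1 0 k); [ring | have := z k; lra].
  - by rewrite c3; ring.
  - by rewrite c4 (_ : v4 0 k = - v3 0 k); [ring | have := z k; have := hs k; lra].
split.
  apply: normN; first by move=> k; rewrite !addE; have := hs k; lra.
  apply/eqP => /dot0 Z.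
  have z k : v2 0 k + v3 0 k = 0 by have := congr1 (fun M : 'rV[R]_3 => M 0 k) Z; rewrite addE zeroE.
  apply: (@copl R A0 A1 A2 A3 A4 v1 v2 r1 0 0 (- r4) 0 r2 (- r3) 0 _ _ _ _ nc) => k.
  - by rewrite c1; ring.
  - by rewrite c2; ring.
  - by rewrite c3 (_ : v3 0 k = - v2 0 k); [ring | have := z k; lra].
  - by rewrite c4 (_ : v4 0 k = - v1 0 k); [ring | have := z k; have := hs k; lra].
apply: normN; first by move=> k; rewrite !addE; have := hs k; lra.
apply/eqP => /dot0 Z.
have z k : v1 0 k + v3 0 k = 0 by have := congr1 (fun M : 'rV[R]_3 => M 0 k) Z; rewrite addE zeroE.
apply: (@copl R A0 A1 A2 A3 A4 v1 v2 r1 0 (- r3) 0 0 r2 0 (- r4) _ _ _ _ nc) => k.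
- by rewrite c1; ring.
- by rewrite c2; ring.
- by rewrite c3 (_ : v3 0 k = - v1 0 k); [ring | have := z k; lra].
- by rewrite c4 (_ : v4 0 k = - v2 0 k); [ring | have := z k; have := hs k; lra].
Qed.
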